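(* Let $G$ be a compact, totally disconnected group and $\alpha$ an automorphism of $G$ that is topologically transitive. Then for every $k\in\mathbb{Z}\setminus\{0\}$ the map $\eta_k:G\to G$, $\eta_k(x)=x^{-1}\alpha^k(x)$, is surjective.
   Context: $\alpha$ is topologically transitive if there is $x\in G$ with $\{\alpha^n(x):n\in\mathbb{Z}\}$ dense in $G$. *)

(* Defs.v *)
From HB Require Import structures.
From mathcomp Require Import all_boot all_order all_algebra.
From mathcomp Require Import all_classical all_reals all_analysis.
Set Implicit Arguments. Unset Strict Implicit. Unset Printing Implicit Defensive.
Import Order.TTheory GRing.Theory Num.Theory.
Local Open Scope classical_set_scope.

Definition is_topological_group (G : topologicalType)
  (mul : G -> G -> G) (inv : G -> G) (one : G) : Prop :=
  [/\ (forall x y z, mul x (mul y z) = mul (mul x y) z),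
      (forall x, mul one x = x /\ mul x one = x),
      (forall x, mul (inv x) x = one /\ mul x (inv x) = one),
      continuous (fun p : G * G => mul p.1 p.2) & continuous inv].

Definition is_automorphism (G : topologicalType) (mul : G -> G -> G)
  (alpha alphai : G -> G) : Prop :=
  [/\ cancel alpha alphai, cancel alphai alpha,
      (forall x y, alpha (mul x y) = mul (alpha x) (alpha y)),
      continuous alpha & continuous alphai].

Definition zpow_map (G : Type) (alpha alphai : G -> G) (k : int) : G -> G :=
  match k with
  | Posz n => iter n alpha
  | Negz n => iter n.+1 alphai
  end.

Definition topologically_transitive (G : topologicalType)
  (alpha alphai : G -> G) : Prop :=
  exists x : G, dense (range (fun n : int => zpow_map alpha alphai n x)).

(* Main.v *)
Require Import Defs.
From HB Require Import structures.
From mathcomp Require Import all_boot all_order all_algebra.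
From mathcomp Require Import all_classical all_reals all_analysis.
Set Implicit Arguments. Unset Strict Implicit. Unset Printing Implicit Defensive.
Local Open Scope classical_set_scope.

Section Clopen.
Variable T : topologicalType.
Hypothesis hT : hausdorff_space T.
Hypothesis cT : compact [set: T].
Hypothesis tdT : totally_disconnected [set: T].
Variable x : T.
Let Q := [set y | forall C : set T, clopen C -> C x -> C y].

Lemma clopen_cover (U : set T) : open U -> Q `<=` U ->
  exists C, [/\ clopen C, C x & C `<=` U].
Proof.
move=> oU QU; apply: contrapT => nC.
pose F := filter_from [set C : set T | clopen C /\ C x] (fun C => C `&` ~` U).
have FF : Filter F.
  apply: filter_from_filter; first by exists setT; split => //; exact: clopenT.
  move=> A B [cA Ax] [cB Bx]; exists (A `&` B); first by split => //; exact: clopenI.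
  by move=> z [[Az Bz] nUz].
have PF : ProperFilter F.
  apply: filter_from_proper => C [cC Cx]; apply: contrapT => /set0P/negP.
  rewrite negbK => /eqP C0; apply: nC; exists C; split => // z Cz.
  by apply: contrapT => nUz; have : (C `&` ~` U) z by []; rewrite C0.
have [y [_ cly]] := cT PF (filterT).
have Qy : Q y.
  move=> C cC Cx; apply: contrapT => nCy.
  have nb : nbhs y (~` C) by apply: open_nbhs_nbhs; split => //; apply: closed_openC; case: cC.
  have FC : F (C `&` ~` U) by exists C.
  by have [z [[Cz _] nCz]] := cly _ _ FC nb.
have nbU : nbhs y U by apply: open_nbhs_nbhs; split => //; exact: QU.
have FT : F (setT `&` ~` U) by exists setT => //; split => //; exact: clopenT.
by have [z [[_ nUz] Uz]] := cly _ _ FT nbU.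
Qed.

Lemma Q_closed : closed Q.
Proof.
move=> y cly C cC Cx; have [_ clC] := cC; apply: clC.
by apply: closureS cly => z /(_ C cC Cx).
Qed.

Lemma Q_connected : connected Q.
Proof.
apply/connectedP => E [E0 QE [sep1 sep2]].
pose P b := closure (E b).
have PQ b : P b `<=` Q.
  move=> z Pz; apply: Q_closed; apply: closureS Pz; rewrite QE.
  by case: b => w ?; [right|left].
have Pdisj z : P false z -> P true z -> False.
  move=> Pf Pt; have := PQ _ _ Pf; rewrite QE => -[Ef|Et].
  - by have : (E false `&` closure (E true)) z by []; rewrite sep2.
  - by have : (closure (E false) `&` E true) z by []; rewrite sep1.
have nT := compact_normal hT cT.
have clPf : closed (P false) by exact: closed_closure.
have snb : set_nbhs (P false) (~` P true).
  move=> z Pfz; apply: open_nbhs_nbhs; split; last by move=> Ptz; exact: Pdisj Pfz Ptz.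
  exact/closed_openC/closed_closure.
have [W sW clW] := nT _ clPf _ snb.
pose O1 := W°; pose O2 := ~` closure W.
have oO1 : open O1 by exact: open_interior.
have oO2 : open O2 by exact/closed_openC/closed_closure.
have dO z : O1 z -> O2 z -> False.
  by move=> /interior_subset Wz; apply; exact: subset_closure.
have PO1 : P false `<=` O1 by move=> z /sW /nbhs_interior/nbhs_singleton.
have PO2 : P true `<=` O2 by move=> z Ptz /clW; apply.
have QO : Q `<=` O1 `|` O2.
  by rewrite QE => z [/subset_closure/PO1|/subset_closure/PO2]; [left|right].
have [C [[oC clC] Cx CO]] := clopen_cover (openU oO1 oO2) QO.
have Qx : Q x by [].
have clD1 : clopen (C `&` O1).
  split; first exact: openI.
  have -> : C `&` O1 = C `&` ~` O2.
    apply/seteqP; split => z [Cz H]; split => //; first by move=> /(dO _ H).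
    by case: (CO _ Cz).
  by apply: closedI => //; exact: open_closedC.
have clD2 : clopen (C `&` O2).
  split; first exact: openI.
  have -> : C `&` O2 = C `&` ~` O1.
    apply/seteqP; split => z [Cz H]; split => //; first by move=> /dO; apply.
    by case: (CO _ Cz).
  by apply: closedI => //; exact: open_closedC.
have [e Ee] := E0 true; have [e' Ee'] := E0 false.
have QEt : Q e by rewrite QE; right.
have QEf : Q e' by rewrite QE; left.
have Pt : P true e by exact: subset_closure.
have Pf : P false e' by exact: subset_closure.
case: (CO _ Cx) => [Hx1|Hx2].
- have [_ O1e] := QEt _ clD1 (conj Cx Hx1).
  exact: dO O1e (PO2 _ Pt).
- have [_ O2e] := QEf _ clD2 (conj Cx Hx2).
  exact: dO (PO1 _ Pf) O2e.
Qed.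

Lemma Q_sub : Q `<=` [set x].
Proof.
rewrite -(tdT (I : setT x)); apply: connected_component_max => //.
exact: Q_connected.
Qed.

Lemma clopen_nbhs (U : set T) : nbhs x U -> exists C, [/\ clopen C, C x & C `<=` U].
Proof.
rewrite nbhsE => -[V0 [oV0 V0x] V0U].
have QO : Q `<=` V0 by move=> z /Q_sub ->.
have [C [cC Cx CO]] := clopen_cover oV0 QO.
exists C; split => //; exact: subset_trans CO V0U.
Qed.
End Clopen.


Section Grp.
Variables (G : topologicalType) (mul : G -> G -> G) (inv : G -> G) (one : G).
Hypothesis HG : is_topological_group mul inv one.

Lemma mulA x y z : mul x (mul y z) = mul (mul x y) z.
Proof. by case: HG. Qed.
Lemma mul1g x : mul one x = x. Proof. by case: HG => _ /(_ x) []. Qed.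
Lemma mulg1 x : mul x one = x. Proof. by case: HG => _ /(_ x) []. Qed.
Lemma mulVg x : mul (inv x) x = one. Proof. by case: HG => _ _ /(_ x) []. Qed.
Lemma mulgV x : mul x (inv x) = one. Proof. by case: HG => _ _ /(_ x) []. Qed.
Lemma mulKg x y : mul (inv x) (mul x y) = y. Proof. by rewrite mulA mulVg mul1g. Qed.
Lemma mulKVg x y : mul x (mul (inv x) y) = y. Proof. by rewrite mulA mulgV mul1g. Qed.
Lemma mulgK x y : mul (mul y x) (inv x) = y. Proof. by rewrite -mulA mulgV mulg1. Qed.
Lemma mulgKV x y : mul (mul y (inv x)) x = y. Proof. by rewrite -mulA mulVg mulg1. Qed.
Lemma mulI x y z : mul x y = mul x z -> y = z.
Proof. by move=> e; rewrite -(mulKg x y) e mulKg. Qed.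
Lemma invK x : inv (inv x) = x.
Proof. by apply: (@mulI (inv x)); rewrite mulgV mulVg. Qed.
Lemma invM x y : inv (mul x y) = mul (inv y) (inv x).
Proof. by apply: (@mulI (mul x y)); rewrite mulgV mulA mulgK mulgV. Qed.
Lemma inv1 : inv one = one.
Proof. by rewrite -{2}(mulVg one) mulg1. Qed.
Lemma invI x y : inv x = inv y -> x = y.
Proof. by move=> e; rewrite -(invK x) e invK. Qed.

Lemma mul_cont : continuous (fun p : G * G => mul p.1 p.2).
Proof. by case: HG. Qed.
Lemma inv_cont : continuous inv.
Proof. by case: HG. Qed.

Lemma mul_near a b U : nbhs (mul a b) U ->
  exists2 A, nbhs a A & exists2 B, nbhs b B & forall x y, A x -> B y -> U (mul x y).
Proof.
move=> nU; have [[A B] /= [nA nB] AB] := @mul_cont (a,b) U nU.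
by exists A => //; exists B => // x y Ax By; exact: (AB (x,y)).
Qed.

Lemma inv_near a U : nbhs (inv a) U -> nbhs a [set x | U (inv x)].
Proof. by move=> nU; exact: (@inv_cont a U nU). Qed.

Lemma lmul_near g a U : nbhs (mul g a) U -> nbhs a [set x | U (mul g x)].
Proof.
move=> /mul_near [A nA [B nB AB]]; apply: filterS nB => y By.
by apply: AB => //; exact: nbhs_singleton.
Qed.

Lemma rmul_near g a U : nbhs (mul a g) U -> nbhs a [set x | U (mul x g)].
Proof.
move=> /mul_near [A nA [B nB AB]]; apply: filterS nA => y Ay.
by apply: AB => //; exact: nbhs_singleton.
Qed.

Lemma T1_closed : totally_disconnected [set: G] -> forall x : G, closed [set x].
Proof.
move=> td x; have cc : connected (closure [set x]) by apply: connected_closure; exact: connected1.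
have := @connected_component_max _ setT (closure [set x]) x _ _ cc.
rewrite (td x I); apply => //; exact: subset_closure.
Qed.

Lemma hausdorffG : totally_disconnected [set: G] -> hausdorff_space G.
Proof.
move=> td p q cl; apply: contrapT => npq.
pose u := mul (inv p) q.
have nu : nbhs one (~` [set u]).
  apply: open_nbhs_nbhs; split; first exact/closed_openC/T1_closed.
  move=> /= e; apply: npq; by rewrite -(mulKVg p q) -/u -e mulg1.
have nu' : nbhs (mul one (inv one)) (~` [set u]) by rewrite mulgV.
have [A nA [B nB AB]] := mul_near nu'.
have nB' : nbhs one [set x | B (inv x)] by exact: (@inv_near one B nB).
pose V := A `&` [set x | B (inv x)].
have nV : nbhs one V by exact: filterI.
have np : nbhs p [set z | V (mul (inv p) z)] by apply: lmul_near; rewrite mulVg.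
have nq : nbhs q [set z | V (mul (inv q) z)] by apply: lmul_near; rewrite mulVg.
have [z [[Az Biz] [Az' Biz']]] := cl _ _ np nq.
apply: (AB _ _ Az Biz') => /=.
by rewrite invM invK mulA mulgK.
Qed.


Definition nsub (N : set G) := [/\ N one, (forall a b, N a -> N b -> N (mul a b)),
  (forall a, N a -> N (inv a)), (forall g a, N a -> N (mul (inv g) (mul a g)))
  & nbhs one N].

Lemma tube1 (C : set G) : compact C -> open C ->
  exists2 W, nbhs one W & forall c w, C c -> W w -> C (mul c w).
Proof.
move=> cC oC.
have H : forall c, C c -> \forall c' \near c & w \near one, C (mul c' w).
  move=> c Cc; have nC : nbhs (mul c one) C.
    by rewrite mulg1; apply: open_nbhs_nbhs; split.
  have [A nA [B nB AB]] := mul_near nC.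
  by exists (A, B) => // -[x y] [Ax By]; exact: AB.
have := (compact_near_coveringP C).1 cC G (nbhs one) (fun w c => C (mul c w)) _ H.
move=> WC; exists [set w | C `<=` (fun c => C (mul c w))]; first exact: WC.
by move=> c w Cc Ww; exact: Ww.
Qed.

Lemma tube2 (W0 : set G) : compact [set: G] -> nbhs one W0 ->
  exists2 W, nbhs one W & forall g w, W w -> W0 (mul (inv g) (mul w g)).
Proof.
move=> cG nW0.
have H : forall g, [set: G] g -> \forall g' \near g & w \near one, W0 (mul (inv g') (mul w g')).
  move=> g _; have n0 : nbhs (mul (inv g) (mul one g)) W0 by rewrite mul1g mulVg.
  have [A1 nA1 [B1 nB1 AB1]] := mul_near n0.
  have [A2 nA2 [B2 nB2 AB2]] := mul_near nB1.
  exists ([set x | A1 (inv x)] `&` B2, A2).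
    by split => //; apply: filterI => //; exact: (@inv_near g A1 nA1).
  by move=> [x y] [[Ax Bx] Ay] /=; apply: AB1 => //; exact: AB2.
have := (compact_near_coveringP _).1 cG G (nbhs one)
  (fun w g => W0 (mul (inv g) (mul w g))) _ H.
move=> WC; exists [set w | [set: G] `<=` (fun g => W0 (mul (inv g) (mul w g)))]; first exact: WC.
by move=> g w Ww; exact: Ww.
Qed.

Inductive gen (V : set G) : G -> Prop :=
| gen1 : gen V one
| genM x v : gen V x -> V v -> gen V (mul x v).

Lemma nsub_in_clopen (C : set G) : compact [set: G] -> clopen C -> C one ->
  exists N, nsub N /\ N `<=` C.
Proof.
move=> cG [oC clC] C1.
have cC : compact C by apply: (subclosed_compact clC cG).
have [W0 nW0 CW0] := tube1 cC oC.
have [W1 nW1 W1W0] := tube2 cG nW0.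
pose V := [set v | forall g, W0 (mul (inv g) (mul v g)) /\ W0 (mul (inv g) (mul (inv v) g))].
have nV : nbhs one V.
  have ni : nbhs one [set x | W1 (inv x)] by apply: (@inv_near one W1); rewrite inv1.
  by apply: filterS (filterI nW1 ni) => v [W1v W1iv] g; split; apply: W1W0.
have VW0 v : V v -> W0 v.
  by move=> /(_ one) [+ _]; rewrite inv1 mul1g mulg1.
have Vinv v : V v -> V (inv v).
  by move=> Vv g; have [a b] := Vv g; rewrite invK; split.
have conjE g h v : mul (inv g) (mul (mul (inv h) (mul v h)) g) =
    mul (inv (mul h g)) (mul v (mul h g)).
  by rewrite invM !mulA -!mulA.
have Vconj h v : V v -> V (mul (inv h) (mul v h)).
  move=> Vv g; rewrite conjE; split; first by have [] := Vv (mul h g).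
  have -> : inv (mul (inv h) (mul v h)) = mul (inv h) (mul (inv v) h).
    by rewrite !invM invK mulA.
  by rewrite conjE; have [] := Vv (mul h g).
exists (gen V); split; last first.
  move=> x; elim => // y v _ Cy Vv; exact: CW0 (VW0 _ Vv).
have genMM a b : gen V a -> gen V b -> gen V (mul a b).
  move=> ga; elim => [|y v _ IH Vv]; first by rewrite mulg1.
  by rewrite mulA; apply: genM.
have genV v : V v -> gen V v by move=> Vv; rewrite -(mul1g v); apply: genM => //; exact: gen1.
split; first exact: gen1.
- exact: genMM.
- by move=> a; elim => [|y v _ IH Vv]; [rewrite inv1; exact: gen1|rewrite invM; apply: genMM => //; exact/genV/Vinv].
- move=> g a; elim => [|y v _ IH Vv]; first by rewrite mul1g mulVg; exact: gen1.
  have -> : mul (inv g) (mul (mul y v) g) = mul (mul (inv g) (mul y g)) (mul (inv g) (mul v g)).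
    by rewrite !mulA mulgK.
  by apply: genMM => //; exact/genV/Vconj.
- by apply: filterS nV => v; exact: genV.
Qed.

End Grp.


Section Tw0.
Variables (G : topologicalType) (mul : G -> G -> G) (inv : G -> G) (one : G).
Hypothesis HG : is_topological_group mul inv one.

Definition ghom (f : G -> G) := forall x y, f (mul x y) = mul (f x) (f y).

Lemma hom1 f : ghom f -> f one = one.
Proof.
move=> fM; apply: (@mulI _ _ _ _ HG (f one)).
by rewrite -fM !(mulg1 HG).
Qed.

Lemma homV f x : ghom f -> f (inv x) = inv (f x).
Proof.
move=> fM; apply: (@mulI _ _ _ _ HG (f x)).
by rewrite -fM !(mulgV HG) hom1.
Qed.

Lemma iter_hom f n : ghom f -> ghom (iter n f).
Proof.
move=> fM; elim: n => [//|n IH] x y /=; by rewrite IH fM.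
Qed.

Lemma iter_can (f fi : G -> G) n : cancel f fi -> cancel (iter n f) (iter n fi).
Proof.
move=> fK; elim: n => [//|n IH] x.
by rewrite [iter n.+1 f x]iterSr /= IH fK.
Qed.

Definition TT (N : set G) (b : G -> G) :=
  [set t | exists x n, N n /\ t = mul (mul (inv x) (b x)) n].

End Tw0.

Section Tw.
Variables (G : topologicalType) (mul : G -> G -> G) (inv : G -> G) (one : G).
Hypothesis HG : is_topological_group mul inv one.
Variables (b bi : G -> G) (N : set G).
Hypotheses (bK : cancel b bi) (biK : cancel bi b) (bM : ghom mul b).
Hypotheses (N1 : N one) (NM : forall a c, N a -> N c -> N (mul a c))
  (NV : forall a, N a -> N (inv a)) (Nc : forall g a, N a -> N (mul (inv g) (mul a g))).

Let mA := mulA HG. Let m1g := mul1g HG. Let mg1 := mulg1 HG.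
Let mVg := mulVg HG. Let mgV := mulgV HG. Let mKg := mulKg HG. Let mKVg := mulKVg HG.
Let mgK := mulgK HG. Let mgKV := mulgKV HG. Let iK := invK HG. Let iM := invM HG.
Let i1 := inv1 HG.

Lemma R1 t n : TT mul inv N b t -> N n -> TT mul inv N b (mul t n).
Proof. by move=> [x [n0 [Nn0 ->]]] Nn; exists x, (mul n0 n); split; [exact: NM|rewrite mA]. Qed.

Lemma R2 t g : TT mul inv N b t -> TT mul inv N b (mul (inv g) (mul t (b g))).
Proof.
move=> [x [n0 [Nn0 ->]]]; exists (mul x g), (mul (inv (b g)) (mul n0 (b g))).
split; first exact: Nc.
by rewrite bM iM !mA mgK.
Qed.

Lemma Rpos j t n : TT mul inv N b t -> N n -> TT mul inv N b (mul t (iter j b n)).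
Proof.
elim: j t n => [|j IH] t n Tt Nn; first exact: R1.
pose m := iter j b n; pose s := iter j bi t.
have hj := iter_hom j bM.
have Tmt : TT mul inv N b (mul m t).
  have := IH t (mul (inv s) (mul n s)) Tt (Nc s Nn).
  rewrite hj hj (homV HG _ hj) /s (iter_can j biK) -/m.
  by rewrite mKVg.
by have := R2 m Tmt; rewrite -mA mKg.
Qed.

Lemma Tinv t : TT mul inv N b t -> TT mul inv N bi (inv t).
Proof.
move=> [x [n0 [Nn0 ->]]].
pose e := mul (inv (b x)) (bi (b x)).
exists (b x), (mul (inv e) (mul (inv n0) e)); split; first exact/Nc/NV.
by rewrite mKVg /e bK iM iM iK.
Qed.

End Tw.

Section Tw2.
Variables (G : topologicalType) (mul : G -> G -> G) (inv : G -> G) (one : G).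
Hypothesis HG : is_topological_group mul inv one.
Variables (b bi : G -> G) (N : set G).
Hypotheses (bK : cancel b bi) (biK : cancel bi b) (bM : ghom mul b).
Hypotheses (N1 : N one) (NM : forall a c, N a -> N c -> N (mul a c))
  (NV : forall a, N a -> N (inv a)) (Nc : forall g a, N a -> N (mul (inv g) (mul a g))).

Let mA := mulA HG. Let m1g := mul1g HG. Let mg1 := mulg1 HG.
Let mVg := mulVg HG. Let mgV := mulgV HG. Let mKg := mulKg HG. Let mKVg := mulKVg HG.
Let mgK := mulgK HG. Let mgKV := mulgKV HG. Let iK := invK HG. Let iM := invM HG.
Let i1 := inv1 HG.

Lemma biM : ghom mul bi.
Proof. by move=> x y; apply: (can_inj bK); rewrite bM !biK. Qed.

Lemma Rneg j t n : TT mul inv N b t -> N n -> TT mul inv N b (mul t (iter j bi n)).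
Proof.
move=> Tt Nn; have Ti := Tinv HG bK NV Nc Tt.
pose s := iter j b (inv t).
have := Rpos HG bK biM NM Nc j Ti (Nc s (NV Nn)).
have hj := iter_hom j biM.
rewrite hj hj (homV HG _ hj) /s (iter_can j bK) (homV HG _ hj) iK.
rewrite mKg -iM => /(Tinv HG biK NV Nc).
by rewrite iK.
Qed.

Inductive hgen : G -> Prop :=
| hg1 : hgen one
| hgb x j n : hgen x -> N n -> hgen (mul x (iter j b n))
| hgbi x j n : hgen x -> N n -> hgen (mul x (iter j bi n)).

Lemma hgen_T x : hgen x -> TT mul inv N b x.
Proof.
elim => [|y j n _ IH Nn|y j n _ IH Nn].
- exists one, one; split => //; by rewrite (hom1 HG bM) i1 !mg1.
- exact: (Rpos HG biK bM NM Nc j IH Nn).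
- exact: Rneg.
Qed.

Lemma hgenM x y : hgen x -> hgen y -> hgen (mul x y).
Proof.
move=> hx; elim => [|z j n _ IH Nn|z j n _ IH Nn]; first by rewrite mg1.
- by rewrite mA; apply: hgb.
- by rewrite mA; apply: hgbi.
Qed.

Lemma hgen_gen j n : N n -> hgen (iter j b n) /\ hgen (iter j bi n).
Proof.
move=> Nn; split; rewrite -(m1g (iter _ _ _)); [apply: hgb|apply: hgbi] => //; exact: hg1.
Qed.

Lemma hgenV x : hgen x -> hgen (inv x).
Proof.
elim => [|y j n _ IH Nn|y j n _ IH Nn]; first by rewrite i1; exact: hg1.
- rewrite iM; pose s := iter j bi (inv y).
  have hj := iter_hom j bM.
  have := (hgen_gen j (Nc s (NV Nn))).1.
  rewrite hj hj (homV HG _ hj) /s (iter_can j biK) (homV HG _ hj) iK => h.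
  by have := hgenM IH h; rewrite mKg.
- rewrite iM; pose s := iter j b (inv y).
  have hj := iter_hom j biM.
  have := (hgen_gen j (Nc s (NV Nn))).2.
  rewrite hj hj (homV HG _ hj) /s (iter_can j bK) (homV HG _ hj) iK => h.
  by have := hgenM IH h; rewrite mKg.
Qed.

Lemma hgen_b x : hgen x -> hgen (b x) /\ hgen (bi x).
Proof.
elim => [|y j n _ [IH1 IH2] Nn|y j n _ [IH1 IH2] Nn].
- by rewrite (hom1 HG bM) (hom1 HG biM); split; exact: hg1.
- rewrite bM biM; split; apply: hgenM => //.
  + by have := (hgen_gen j.+1 Nn).1.
  + case: j => [|j] /=; first by have := (hgen_gen 1 Nn).2.
    by rewrite bK; exact: (hgen_gen j Nn).1.
- rewrite bM biM; split; apply: hgenM => //.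
  + case: j => [|j] /=; first by have := (hgen_gen 1 Nn).1.
    by rewrite biK; exact: (hgen_gen j Nn).2.
  + by have := (hgen_gen j.+1 Nn).2.
Qed.

End Tw2.


Section Orb.
Variables (G : topologicalType) (mul : G -> G -> G) (inv : G -> G) (one : G).
Hypothesis HG : is_topological_group mul inv one.
Variables (a ai : G -> G).
Hypotheses (aK : cancel a ai) (aiK : cancel ai a) (aM : ghom mul a)
  (ac : continuous a).
Variable z : G.
Hypothesis dz : dense (range (fun n : int => zpow_map a ai n z)).
Variables (H : set G) (m : nat).
Hypotheses (H1 : one = one) (HM : forall x y, H x -> H y -> H (mul x y))
  (HV : forall x, H x -> H (inv x)) (nH : nbhs one H) (m0 : (0 < m)%N)
  (Ha : forall x, H x -> H (iter m a x)) (Hai : forall x, H x -> H (iter m ai x)).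

Let mA := mulA HG. Let m1g := mul1g HG. Let mg1 := mulg1 HG.
Let mVg := mulVg HG. Let mgV := mulgV HG. Let mKg := mulKg HG. Let mKVg := mulKVg HG.
Let mgK := mulgK HG. Let mgKV := mulgKV HG. Let iK := invK HG. Let iM := invM HG.
Let i1 := inv1 HG.

Lemma iter_near i x U : nbhs (iter i a x) U -> nbhs x [set y | U (iter i a y)].
Proof.
elim: i U => [//|i IH] U /= nU.
by apply: (IH [set y | U (a y)]); exact: (@ac (iter i a x) U nU).
Qed.

Let K := [set g | forall i, (i < m)%N -> H (iter i a g)].

Lemma nK : nbhs one K.
Proof.
suff h : forall m', nbhs one [set g | forall i, (i < m')%N -> H (iter i a g)] by exact: h m.
elim => [|m' IH]; first by apply: filterS filterT.
have n1 : nbhs one [set y | H (iter m' a y)].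
  by apply: iter_near; rewrite (hom1 HG (iter_hom m' aM)).
apply: filterS (filterI IH n1) => g [Kg Hg] i; rewrite ltnS leq_eqVlt => /orP[/eqP->//|].
exact: Kg.
Qed.

Lemma KM x y : K x -> K y -> K (mul x y).
Proof. by move=> Kx Ky i im; rewrite (iter_hom i aM); apply: HM; [exact: Kx|exact: Ky]. Qed.

Lemma KV x : K x -> K (inv x).
Proof. by move=> Kx i im; rewrite (homV HG _ (iter_hom i aM)); apply: HV; exact: Kx. Qed.

Lemma Ka x : K x -> K (a x).
Proof.
move=> Kx i im; rewrite -iterSr.
have [im'|mi] := ltnP i.+1 m; first exact: Kx.
have -> : i.+1 = m by apply/eqP; rewrite eqn_leq im mi.
exact: Ha (Kx 0%N m0).
Qed.

Lemma Kai x : K x -> K (ai x).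
Proof.
move=> Kx [|i] im.
- have hm : (m.-1 < m)%N by rewrite prednK.
  have := Hai (Kx m.-1 hm).
  have -> : iter m ai (iter m.-1 a x) = ai x.
    by rewrite -[in iter m ai _](prednK m0) /= (iter_can _ aK).
  by [].
- by rewrite iterSr aiK; apply: Kx; exact: ltnW.
Qed.

Lemma K_iter_a n x : K (iter n a x) -> K x.
Proof. elim: n x => [//|n IH] x /= => /Kai; rewrite aK; exact: IH. Qed.

Lemma K_iter_ai n x : K (iter n ai x) -> K x.
Proof. elim: n x => [//|n IH] x /= => /Ka; rewrite aiK; exact: IH. Qed.

Lemma K_zpow n x : K (zpow_map a ai n x) -> K x.
Proof. case: n => n /=; [exact: K_iter_a|exact: (@K_iter_ai n.+1)]. Qed.

Lemma zpow_K n x : K x -> K (zpow_map a ai n x).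
Proof.
move=> Kx; case: n => n /=.
- by elim: n => [//|n IH] /=; apply: Ka.
- by elim: n => [|n IH] /=; apply: Kai.
Qed.

Lemma orbit_hit (U : set G) (g : G) : nbhs g U ->
  exists n, U (zpow_map a ai n z).
Proof.
rewrite nbhsE => -[V0 [oV0 V0g] V0U].
have [w [V0w [n _ e]]] := dz (ex_intro _ g V0g) oV0.
by exists n; apply: V0U; rewrite e.
Qed.

Lemma K_all g : H g.
Proof.
have [n Kn] := orbit_hit nK.
have Kz := K_zpow Kn.
have ng : nbhs g [set p | K (mul (inv g) p)].
  by apply: (@lmul_near _ _ _ _ HG (inv g) g K); rewrite mVg; exact: nK.
have [n' Kn'] := orbit_hit ng.
have Kg : K g.
  have := KM (zpow_K n' Kz) (KV Kn').
  by rewrite iM iK mA mgV m1g.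
by have := Kg 0%N m0.
Qed.

End Orb.


Section Main.
Variables (G : topologicalType) (mul : G -> G -> G) (inv : G -> G) (one : G).
Hypothesis HG : is_topological_group mul inv one.
Hypotheses (cG : compact [set: G]) (tdG : totally_disconnected [set: G]).
Variables (a ai : G -> G).
Hypotheses (aK : cancel a ai) (aiK : cancel ai a) (aM : ghom mul a)
  (ac : continuous a) (aic : continuous ai).
Variable z : G.
Hypothesis dz : dense (range (fun n : int => zpow_map a ai n z)).
Variables (b bi : G -> G) (mm : nat).
Hypotheses (bK : cancel b bi) (biK : cancel bi b) (bM : ghom mul b) (mm0 : (0 < mm)%N)
  (bc : forall x U, nbhs (b x) U -> nbhs x [set y | U (b y)])
  (hb : (b = iter mm a /\ bi = iter mm ai) \/ (b = iter mm ai /\ bi = iter mm a)).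

Let mA := mulA HG. Let m1g := mul1g HG. Let mg1 := mulg1 HG.
Let mVg := mulVg HG. Let mgV := mulgV HG. Let mKg := mulKg HG. Let mKVg := mulKVg HG.
Let mgK := mulgK HG. Let mgKV := mulgKV HG. Let iK := invK HG. Let iM := invM HG.
Let i1 := inv1 HG.

Let eta x := mul (inv x) (b x).

Lemma eta_cont : continuous eta.
Proof.
move=> x U nU; have [A nA [B nB AB]] := mul_near HG nU.
have n1 := @inv_near _ _ _ _ HG x A nA.
have n2 := bc nB.
by apply: filterS (filterI n1 n2) => w [Aw Bw]; exact: AB.
Qed.

Lemma main_surj y : exists x, eta x = y.
Proof.
apply: contrapT => ny.
have hG := hausdorffG HG tdG.
have cS : compact [set eta x | x in [set: G]].
  by apply: continuous_compact => //; exact/continuous_subspaceT/eta_cont.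
have clS := compact_closed hG cS.
have nS : nbhs y (~` [set eta x | x in [set: G]]).
  apply: open_nbhs_nbhs; split; first exact: closed_openC.
  by move=> [x _ e]; apply: ny; exists x.
have nS1 : nbhs one [set w | ~ [set eta x | x in [set: G]] (mul y w)].
  by apply: (@lmul_near _ _ _ _ HG y one (~` range eta)); rewrite mg1.
have [C [cC C1 CS]] := clopen_nbhs hG cG tdG nS1.
have [N [[N1 NM NV Nc nN] NC]] := nsub_in_clopen HG cG cC C1.
have Hall : forall g, hgen mul one b bi N g.
  apply: (@K_all _ _ _ _ HG a ai aK aiK aM ac z dz (hgen mul one b bi N) mm (@hgenM _ _ _ _ HG b bi N)
    (hgenV HG bK biK bM NV Nc)) => //.
  - apply: filterS nN => n Nn; rewrite -(m1g n); exact: (@hgb _ _ _ _ _ _ _ 0%N n (hg1 _ _ _ _ _) Nn).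
  - move=> x hx; have [h1 h2] := hgen_b HG bK biK bM hx.
    by case: hb => -[eb ebi]; rewrite -?eb -?ebi.
  - move=> x hx; have [h1 h2] := hgen_b HG bK biK bM hx.
    by case: hb => -[eb ebi]; rewrite -?eb -?ebi.
have [x [n [Nn ey]]] := hgen_T HG bK biK bM N1 NM NV Nc (Hall y).
have : ~ [set eta x | x in [set: G]] (mul y (inv n)) by apply: CS; apply: NC; exact: NV.
by apply; exists x => //; rewrite ey mgK.
Qed.

End Main.


Unset Implicit Arguments. Set Strict Implicit. Set Printing Implicit Defensive.

Theorem proposition7p1 (G : topologicalType)
  (mul : G -> G -> G) (inv : G -> G) (one : G) (alpha alphai : G -> G) :
  is_topological_group mul inv one ->
  compact [set: G] ->
  totally_disconnected [set: G] ->
  is_automorphism mul alpha alphai ->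
  topologically_transitive alpha alphai ->
  forall k : int, k != 0%R ->
    forall y : G, exists x : G, mul (inv x) (zpow_map alpha alphai k x) = y.
Proof.
move=> HG cG tdG [aK aiK aM ac aic] [z dz] k k0 y.
have aiM : ghom mul alphai.
  by move=> x1 x2; apply: (can_inj aK); rewrite aM !aiK.
case: k k0 => m k0.
- have m0 : (0 < m)%N by rewrite lt0n.
  exact: (@main_surj _ _ _ _ HG cG tdG _ _ aK aiK aM ac z dz (iter m alpha) (iter m alphai) m
    (iter_can m aK) (iter_can m aiK) (iter_hom m aM) m0
    (fun x U nU => iter_near ac nU) (or_introl (conj erefl erefl)) y).
- exact: (@main_surj _ _ _ _ HG cG tdG _ _ aK aiK aM ac z dz (iter m.+1 alphai) (iter m.+1 alpha) m.+1
    (iter_can m.+1 aiK) (iter_can m.+1 aK) (iter_hom m.+1 aiM) (ltn0Sn m)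
    (fun x U nU => iter_near aic nU) (or_intror (conj erefl erefl)) y).
Qed.
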